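(* Let $r\ge 1$ be an integer, let $k_1,\dots,k_r$ be integers, and let $a,b>0$ with $ab\neq \pm 1$. Then for every integer $n\ge 0$, $$\mathbf{E}_{n}^{(k_1,\dots,k_r)}(a,b)=\mathbf{E}_{n}^{(k_1,\dots,k_r)}\!\left(\frac{\ln a}{\ln a+\ln b}\right)(\ln a+\ln b)^n .$$
   Context: For integers $k_1,\dots,k_r$, the multi-polylogarithm is $Li_{(k_1,\dots,k_r)}(z)=\sum_{0<m_1<m_2<\dots<m_r}\frac{z^{m_r}}{m_1^{k_1}m_2^{k_2}\cdots m_r^{k_r}}$ (sum over integers). For $c>0$, $c^t:=e^{t\ln c}$. The Multi Poly-Euler polynomials $\mathbf{E}_n^{(k_1,\dots,k_r)}(x)$ are defined by the generating series $$\frac{2Li_{(k_1,\dots,k_r)}(1-e^{-t})}{(1+e^t)^r}e^{rxt}=\sum_{n=0}^{\infty}\mathbf{E}_{n}^{(k_1,\dots,k_r)}(x)\frac{t^n}{n!}.$$ The generalized Multi Poly-Euler polynomials with parameters $a,b$ are defined by $$\frac{2Li_{(k_1,\dots,k_r)}(1-(ab)^{-t})}{(a^{-t}+b^t)^r}e^{rxt}=\sum_{n=0}^{\infty}\mathbf{E}_{n}^{(k_1,\dots,k_r)}(x;a,b)\frac{t^n}{n!},$$ and $\mathbf{E}_{n}^{(k_1,\dots,k_r)}(a,b):=\mathbf{E}_{n}^{(k_1,\dots,k_r)}(0;a,b)$. *)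

(* Defs.v *)
From Stdlib Require Import Reals ZArith List.
From Coquelicot Require Import Coquelicot.
Import ListNotations.
Open Scope R_scope.

(* inner_sum ks m, for ks = [k_j; ...; k_1] (REVERSED order), is
   sum_{0 < m_1 < ... < m_j < m} 1 / (m_1^{k_1} ... m_j^{k_j});
   the empty product (ks = []) gives 1. *)
Fixpoint inner_sum (ks : list Z) (m : nat) : R :=
  match ks with
  | [] => 1
  | k :: ks' =>
      sum_n (fun p => if (p =? 0)%nat then 0
                      else inner_sum ks' p / powerRZ (INR p) k) (m - 1)
  end.

(* Multi-polylogarithm Li_{(k_1,...,k_r)}(z) for ks = [k_1; ...; k_r]:
   sum_{0<m_1<...<m_r} z^{m_r} / (m_1^{k_1} ... m_r^{k_r}),
   the sum being grouped by the value of the largest index m_r. *)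
Definition Li (ks : list Z) (z : R) : R :=
  match rev ks with
  | [] => 0
  | kr :: rest =>
      Series (fun m => z ^ (S m) / powerRZ (INR (S m)) kr * inner_sum rest (S m))
  end.

Definition EGF (ks : list Z) (x t : R) : R :=
  let r := length ks in
  2 * Li ks (1 - exp (- t)) / (1 + exp t) ^ r * exp (INR r * x * t).

(* E_n^{(ks)}(x) = n! [t^n] EGF = n-th derivative at t = 0. *)
Definition MPEuler (n : nat) (ks : list Z) (x : R) : R :=
  Derive_n (fun t => EGF ks x t) n 0.

Definition EGFab (ks : list Z) (a b x t : R) : R :=
  let r := length ks in
  2 * Li ks (1 - Rpower (a * b) (- t)) / (Rpower a (- t) + Rpower b t) ^ r
    * exp (INR r * x * t).

Definition MPEuler_gen (n : nat) (ks : list Z) (x a b : R) : R :=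
  Derive_n (fun t => EGFab ks a b x t) n 0.

Definition MPEuler_ab (n : nat) (ks : list Z) (a b : R) : R :=
  MPEuler_gen n ks 0 a b.

(* Main.v *)
Require Import Defs.
From Stdlib Require Import Reals ZArith List Lra Lia.
From Coquelicot Require Import Coquelicot.
Import ListNotations.
Open Scope R_scope.

Definition openD (D : R -> Prop) := forall y, D y -> locally y D.

Lemma smooth_gen (D : R -> Prop) (C : (R -> R) -> Prop) :
  openD D ->
  (forall f, C f -> (forall y, D y -> ex_derive f y) /\
     exists g, C g /\ forall y, D y -> Derive f y = g y) ->
  forall n f, C f -> exists g, C g /\ forall y, D y -> Derive_n f n y = g y.
Proof.
  intros HD HC n. induction n as [|n IH]; intros f Hf.
  - exists f; split; auto.
  - destruct (IH f Hf) as [g [Hg Heq]].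
    destruct (HC g Hg) as [_ [h [Hh Hgh]]].
    exists h; split; auto.
    intros y Hy. simpl. rewrite <- Hgh by auto.
    apply Derive_ext_loc. apply (filter_imp D); auto.
Qed.

Lemma smooth_ex (D : R -> Prop) (C : (R -> R) -> Prop) :
  openD D ->
  (forall f, C f -> (forall y, D y -> ex_derive f y) /\
     exists g, C g /\ forall y, D y -> Derive f y = g y) ->
  forall n f, C f -> forall y, D y -> ex_derive (Derive_n f n) y.
Proof.
  intros HD HC n f Hf y Hy.
  destruct (smooth_gen D C HD HC n f Hf) as [g [Hg Heq]].
  apply (ex_derive_ext_loc g).
  - apply (filter_imp D); auto. intros; symmetry; auto.
  - apply (HC g Hg); auto.
Qed.

Inductive Cf : (R -> R) -> Prop :=
| Cc c : Cf (fun _ => c)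
| Ce c : Cf (fun s => exp (c*s))
| Cu : Cf (fun s => / (1 + exp s))
| CA a : Rbar_le 1 (CV_radius a) -> Cf (fun s => PSeries a (1 - exp (- s)))
| Cp f g : Cf f -> Cf g -> Cf (fun s => f s + g s)
| Cm f g : Cf f -> Cf g -> Cf (fun s => f s * g s).

Definition DD (y : R) := Rabs y < 1/2.

Lemma DD_open : openD DD.
Proof.
  intros y Hy. unfold DD in *.
  assert (He : 0 < 1/2 - Rabs y) by lra.
  exists (mkposreal _ He). intros t Ht.
  unfold ball in Ht; simpl in Ht. unfold AbsRing_ball, abs, minus, plus, opp in Ht; simpl in Ht.
  assert (Rabs t <= Rabs (t + - y) + Rabs y).
  { replace t with ((t + - y) + y) at 1 by ring. apply Rabs_triang. }
  lra.
Qed.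

Lemma DD_arg y : DD y -> Rbar_lt (Rabs (1 - exp (- y))) 1.
Proof.
  unfold DD; intros Hy. simpl.
  assert (H1 : exp (- y) <= exp (1/2)).
  { destruct (Rle_lt_or_eq_dec (-y) (1/2)) as [h|h]. { apply Rabs_def2 in Hy; lra. } left; apply exp_increasing; auto. rewrite h; right; auto. }
  assert (H2 : exp (1/2) * exp (1/2) <= 3).
  { rewrite <- exp_plus. replace (1/2+1/2) with 1 by field. apply exp_le_3. }
  assert (H3 : 0 < exp (1/2)) by apply exp_pos.
  assert (H4 : 0 < exp (- y)) by apply exp_pos.
  assert (exp (1/2) < 2) by nra.
  unfold Rabs; destruct (Rcase_abs _); lra.
Qed.

Lemma Rbar_lt_le_trans' (x : R) (r : Rbar) : Rbar_lt x 1 -> Rbar_le 1 r -> Rbar_lt x r.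
Proof.
  intros H1 H2. destruct r; simpl in *; auto; lra.
Qed.

Lemma Cf_closed : forall f, Cf f -> (forall y, DD y -> ex_derive f y) /\
     exists g, Cf g /\ forall y, DD y -> Derive f y = g y.
Proof.
  intros f Hf; induction Hf.
  - split. intros; apply ex_derive_const.
    exists (fun _ => 0); split. constructor. intros; apply Derive_const.
  - assert (Hd : forall y, is_derive (fun s => exp (c*s)) y (c * exp (c*y))).
    { intros y. auto_derive; auto. ring. }
    split. intros y _; eexists; apply Hd.
    exists (fun s => c * exp (c*s)); split. apply (Cm (fun _ => c)); constructor.
    intros y _; apply is_derive_unique, Hd.
  - assert (Hd : forall y, is_derive (fun s => / (1 + exp s)) y ((-1 * exp (1*y)) * (/ (1 + exp y) * / (1 + exp y)))).
    { intros y. assert (0 < exp y) by apply exp_pos. auto_derive. lra.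
      change (AbsRing.sort R_AbsRing) with R in y. rewrite (Rmult_1_l y). field. lra. }
    split. intros y _; eexists; apply Hd.
    exists (fun s => (-1 * exp (1*s)) * (/ (1 + exp s) * / (1 + exp s))); split.
    apply (Cm (fun s => -1 * exp (1*s))). apply (Cm (fun _ => -1)); constructor.
      apply Cm; constructor.
    intros y _; apply is_derive_unique, Hd.
  - assert (Hd : forall y, DD y -> is_derive (fun s => PSeries a (1 - exp (- s))) y
        (PSeries (PS_derive a) (1 - exp (- y)) * exp (-1 * y))).
    { intros y Hy.
      assert (Hg : is_derive (fun s => 1 - exp (- s)) y (exp (- y))).
      { auto_derive; auto. ring. }
      assert (Hf : is_derive (PSeries a) (1 - exp (- y)) (PSeries (PS_derive a) (1 - exp (- y)))).
      { apply is_derive_PSeries. eapply Rbar_lt_le_trans'. apply DD_arg; auto. auto. }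
      pose proof (is_derive_comp (PSeries a) (fun s => 1 - exp (- s)) y _ _ Hf Hg) as Hc.
      replace (-1 * y) with (- y) by ring.
      rewrite Rmult_comm. exact Hc. }
    split. intros y Hy; eexists; apply Hd; auto.
    exists (fun s => PSeries (PS_derive a) (1 - exp (- s)) * exp (-1 * s)); split.
    apply Cm. apply CA. rewrite CV_radius_derive; auto. constructor.
    intros y Hy; apply is_derive_unique, Hd; auto.
  - destruct IHHf1 as [E1 [g1 [C1 H1]]]. destruct IHHf2 as [E2 [g2 [C2 H2]]].
    split. intros y Hy; apply (ex_derive_plus f g); auto.
    exists (fun s => g1 s + g2 s); split. constructor; auto.
    intros y Hy. rewrite Derive_plus; auto. rewrite H1, H2; auto.
  - destruct IHHf1 as [E1 [g1 [C1 H1]]]. destruct IHHf2 as [E2 [g2 [C2 H2]]].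
    split. intros y Hy; apply ex_derive_mult; auto.
    exists (fun s => g1 s * g s + f s * g2 s); split. repeat constructor; auto.
    intros y Hy. rewrite Derive_mult; auto. rewrite H1, H2; auto.
Qed.
Lemma CV_one : Rbar_le 1 (CV_radius (fun _ => 1)).
Proof.
  destruct (CV_radius_bounded (fun _ => 1)) as [Hub _]. apply Hub.
  exists 1. intros n. rewrite Rmult_1_l, pow1, Rabs_R1; lra.
Qed.

Lemma CV_cmp a b : (forall n, Rabs (a n) <= Rabs (b n)) -> Rbar_le (CV_radius b) (CV_radius a).
Proof.
  intros H. destruct (CV_radius_bounded b) as [_ Hlub]. apply Hlub.
  intros r [M HM]. destruct (CV_radius_bounded a) as [Hub _]. apply Hub.
  exists M. intros n. eapply Rle_trans; [|apply HM]. rewrite !Rabs_mult.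
  apply Rmult_le_compat_r; [apply Rabs_pos|auto].
Qed.

Lemma fact_bound k K : ((k+1)^K * fact k <= fact (k+K))%nat.
Proof.
  induction K.
  - rewrite Nat.add_0_r; simpl; lia.
  - replace (k + S K)%nat with (S (k+K)) by lia.
    replace (fact (S (k+K))) with (S (k+K) * fact (k+K))%nat by reflexivity.
    rewrite Nat.pow_succ_r'.
    remember ((k+1)^K)%nat as X. remember (fact (k+K)) as F. remember (fact k) as G.
    nia.
Qed.

Lemma e_bound K n : INR (S n) ^ K <= PS_derive_n K (fun _ => 1) n.
Proof.
  unfold PS_derive_n. rewrite Rmult_1_r.
  assert (HX : 0 < INR (fact n)) by (apply lt_0_INR, lt_O_fact).
  pose proof (le_INR _ _ (fact_bound n K)) as H.
  rewrite mult_INR, pow_INR in H. replace (n+1)%nat with (S n) in H by lia.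
  replace (INR (S n) ^ K) with (INR (S n) ^ K * INR (fact n) / INR (fact n)) by (field; lra).
  unfold Rdiv. apply Rmult_le_compat_r; auto. left; apply Rinv_0_lt_compat; auto.
Qed.

Fixpoint Nk (ks : list Z) : nat :=
  match ks with [] => 0%nat | k :: ks' => S (Nk ks' + Z.abs_nat k) end.

Lemma inv_powerRZ_bound p k : (1 <= p)%nat -> Rabs (/ powerRZ (INR p) k) <= INR p ^ Z.abs_nat k.
Proof.
  intros Hp. assert (H1 : 1 <= INR p) by (apply (le_INR 1); auto).
  destruct k as [|q|q]; simpl.
  - rewrite Rinv_1, Rabs_R1; lra.
  - assert (1 <= INR p ^ Pos.to_nat q) by (apply pow_R1_Rle; auto).
    rewrite Rabs_pos_eq. 2:{ left; apply Rinv_0_lt_compat; lra. }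
    apply Rle_trans with 1; auto. rewrite <- Rinv_1. apply Rinv_le_contravar; lra.
  - assert (1 <= INR p ^ Pos.to_nat q) by (apply pow_R1_Rle; auto).
    rewrite Rinv_inv. rewrite Rabs_pos_eq; lra.
Qed.

Lemma sum_bound f n B : (forall i, (i <= n)%nat -> Rabs (f i) <= B) -> Rabs (sum_n f n) <= INR (S n) * B.
Proof.
  induction n; intros H.
  - rewrite sum_O. rewrite Rmult_1_l. apply H; lia.
  - rewrite sum_Sn. change (plus (sum_n f n) (f (S n))) with (sum_n f n + f (S n)).
    eapply Rle_trans. apply Rabs_triang. rewrite S_INR.
    assert (Rabs (sum_n f n) <= INR (S n) * B) by (apply IHn; intros; apply H; lia).
    assert (Rabs (f (S n)) <= B) by (apply H; lia). lra.
Qed.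

Lemma inner_bound ks m : (1 <= m)%nat -> Rabs (inner_sum ks m) <= INR m ^ Nk ks.
Proof.
  revert m; induction ks as [|k ks IH]; intros m Hm; simpl.
  - rewrite Rabs_R1; lra.
  - assert (H1 : 1 <= INR m) by (apply (le_INR 1); auto).
    replace (INR m * INR m ^ (Nk ks + Z.abs_nat k)) with
      (INR (S (m - 1)) * (INR m ^ Nk ks * INR m ^ Z.abs_nat k)).
    2:{ rewrite <- pow_add. f_equal. f_equal. lia. }
    apply sum_bound. intros i Hi.
    destruct (Nat.eqb_spec i 0).
    + rewrite Rabs_R0. apply Rmult_le_pos; apply pow_le; lra.
    + unfold Rdiv. rewrite Rabs_mult. apply Rmult_le_compat; try apply Rabs_pos.
      * eapply Rle_trans. apply IH; lia. apply pow_incr. split. apply pos_INR. apply le_INR; lia.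
      * eapply Rle_trans. apply inv_powerRZ_bound; lia. apply pow_incr. split. apply pos_INR. apply le_INR; lia.
Qed.

Definition dco (ks : list Z) : nat -> R :=
  match rev ks with
  | [] => fun _ => 0
  | kr :: rest => fun m => inner_sum rest (S m) / powerRZ (INR (S m)) kr
  end.

Lemma Li_eq ks z : Li ks z = z * PSeries (dco ks) z.
Proof.
  unfold Li, dco, PSeries. destruct (rev ks) as [|kr rest].
  - rewrite (Series_ext _ (fun n => 0 * 0)) by (intros; ring).
    rewrite Series_scal_l. ring.
  - rewrite <- Series_scal_l. apply Series_ext. intros n. simpl. unfold Rdiv. ring.
Qed.

Lemma dco_radius ks : Rbar_le 1 (CV_radius (dco ks)).
Proof.
  unfold dco. destruct (rev ks) as [|kr rest].
  - rewrite CV_radius_const_0. simpl; auto.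
  - eapply Rbar_le_trans. apply CV_one.
    rewrite <- (CV_radius_derive_n (Nk rest + Z.abs_nat kr)).
    apply CV_cmp. intros n.
    eapply Rle_trans. 2: apply Rle_abs. eapply Rle_trans. 2: apply e_bound.
    rewrite pow_add. unfold Rdiv. rewrite Rabs_mult. apply Rmult_le_compat; try apply Rabs_pos.
    apply inner_bound; lia. apply inv_powerRZ_bound; lia.
Qed.

Lemma upow_Cf r : Cf (fun s => (/ (1 + exp s)) ^ r).
Proof.
  induction r. exact (Cc 1). exact (Cm _ _ Cu IHr).
Qed.

Lemma exp_INR_mul (r : nat) y : exp (INR r * y) = exp y ^ r.
Proof.
  induction r. simpl. rewrite Rmult_0_l, exp_0; auto.
  rewrite S_INR, Rmult_plus_distr_r, Rmult_1_l, exp_plus, IHr. simpl. ring.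
Qed.

Lemma EGF_smooth ks x : forall n y, DD y -> ex_derive (Derive_n (fun s => EGF ks x s) n) y.
Proof.
  intros n y Hy.
  set (Fc := fun s => (2 * ((1 + (-1) * exp (-1 * s)) * PSeries (dco ks) (1 - exp (- s))))
                      * (/ (1 + exp s)) ^ length ks * exp ((INR (length ks) * x) * s)).
  assert (HC : Cf Fc).
  { unfold Fc. apply Cm. apply Cm. apply (Cm (fun _ => 2)). constructor. apply Cm.
    apply (Cp (fun _ => 1)). constructor. apply (Cm (fun _ => -1)); constructor.
    apply CA, dco_radius. apply upow_Cf. constructor. }
  assert (Heq : forall s, EGF ks x s = Fc s).
  { intros s. unfold EGF, Fc. rewrite Li_eq.
    assert (0 < exp s) by apply exp_pos.
    rewrite <- Rinv_pow by lra.
    replace (-1 * s) with (- s) by ring.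
    replace (INR (length ks) * x * s) with ((INR (length ks) * x) * s) by ring.
    unfold Rdiv. ring. }
  apply (ex_derive_ext (Derive_n Fc n)).
  intros t; apply Derive_n_ext; intros; symmetry; auto.
  apply (smooth_ex DD Cf DD_open Cf_closed n Fc HC y Hy).
Qed.

Theorem theorem1 (ks : list Z) (a b : R) :
  (1 <= length ks)%nat -> 0 < a -> 0 < b -> a * b <> 1 -> a * b <> -1 ->
  forall n : nat,
    MPEuler_ab n ks a b =
    MPEuler n ks (ln a / (ln a + ln b)) * (ln a + ln b) ^ n.
Proof.
  intros Hr Ha Hb Hab1 _ n.
  set (L := ln a + ln b).
  assert (HL : L <> 0).
  { intros H0. apply Hab1. unfold L in H0. rewrite <- ln_mult in H0 by auto.
    rewrite <- (exp_ln (a*b)) by (apply Rmult_lt_0_compat; auto). rewrite H0. apply exp_0. }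
  set (x := ln a / L).
  unfold MPEuler_ab, MPEuler_gen, MPEuler.
  rewrite (Derive_n_ext _ (fun t => EGF ks x (L * t))).
  - rewrite Derive_n_comp_scal. rewrite Rmult_0_r. apply Rmult_comm.
    rewrite Rmult_0_r. apply (filter_imp DD).
    + intros y Hy k _. destruct k; simpl; auto. apply EGF_smooth; auto.
    + apply DD_open. unfold DD. rewrite Rabs_R0; lra.
  - intros t. unfold EGFab, EGF, Rpower.
    rewrite ln_mult by auto. fold L.
    replace (- t * L) with (- (L * t)) by ring.
    set (c := Li ks (1 - exp (- (L * t)))).
    set (r := length ks).
    replace (exp (t * ln b)) with (exp (- t * ln a) * exp (L * t)).
    2:{ rewrite <- exp_plus. f_equal. unfold L; ring. }
    replace (INR r * x * (L * t)) with (INR r * (t * ln a)).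
    2:{ unfold x. field. auto. }
    rewrite exp_INR_mul.
    replace (exp (t * ln a)) with (/ exp (- t * ln a)).
    2:{ rewrite <- exp_Ropp. f_equal. ring. }
    assert (0 < exp (- t * ln a)) by apply exp_pos.
    assert (0 < exp (L * t)) by apply exp_pos.
    rewrite Rmult_0_r, Rmult_0_l, exp_0.
    replace (exp (- t * ln a) + exp (- t * ln a) * exp (L * t)) with
      (exp (- t * ln a) * (1 + exp (L * t))) by ring.
    rewrite Rpow_mult_distr, <- Rinv_pow by lra.
    field. split; apply pow_nonzero; lra.
Qed.
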